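(* Let $X$ be a shift space, $Y$ an irreducible shift space, and $\phi : X \to Y$ a code. Then any two of the following conditions imply the third: (1) $\phi$ is open; (2) $\phi$ is constant-to-one; (3) $\phi$ is bi-closing.
   Context: Shift spaces are closed shift-invariant subsets of $\mathcal{A}^{\mathbb{Z}}$ ($\mathcal{A}$ finite); a code is a continuous shift-commuting map. $Y$ is irreducible if for all words $u,v$ occurring in $Y$ there is a word $w$ with $uwv$ occurring in $Y$. Open: images of open sets are open. Constant-to-one: every fiber $\phi^{-1}(y)$ is finite and $|\phi^{-1}(y)|$ does not depend on $y\in Y$. With metric $d(x,\bar x)=2^{-k}$, $k$ maximal with $x_{[-k,k]}=\bar x_{[-k,k]}$, points are left (resp. right) asymptotic if $d(\sigma^{-n}x,\sigma^{-n}\bar x)\to0$ (resp. $d(\sigma^{n}x,\sigma^{n}\bar x)\to0$). $\phi$ is right closing if it never identifies two distinct left asymptotic points, left closing if it never identifies two distinct right asymptotic points, bi-closing if both. *)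

(* Defs.v *)
From mathcomp Require Import all_boot.
From Stdlib Require Import ZArith List.
Set Implicit Arguments. Unset Strict Implicit. Unset Printing Implicit Defensive.

Definition point (A : Type) := Z -> A.

Definition shiftn (A : Type) (n : Z) (x : point A) : point A :=
  fun i => x (i + n)%Z.

(* x and y agree on the central block [-k,k]; d(x,y) <= 2^-k. *)
Definition agree (A : Type) (k : nat) (x y : point A) : Prop :=
  forall i : Z, (- Z.of_nat k <= i <= Z.of_nat k)%Z -> x i = y i.

Definition closed_set (A : Type) (X : point A -> Prop) : Prop :=
  forall x, (forall k : nat, exists y, X y /\ agree k x y) -> X x.

Definition shift_invariant (A : Type) (X : point A -> Prop) : Prop :=
  forall x, X x -> X (shiftn 1 x) /\ X (shiftn (-1) x).

Definition shift_space (A : finType) (X : point A -> Prop) : Prop :=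
  closed_set X /\ shift_invariant X.

Definition occurs (A : Type) (Y : point A -> Prop) (u : list A) : Prop :=
  exists y, Y y /\ exists i : Z,
    forall j : nat, (j < length u)%coq_nat -> forall d : A,
      y (i + Z.of_nat j)%Z = List.nth j u d.

Definition irreducible (A : Type) (Y : point A -> Prop) : Prop :=
  forall u v, occurs Y u -> occurs Y v ->
    exists w, occurs Y (u ++ w ++ v).

(* A code phi : X -> Y (phi is given on A^Z, only its restriction to X matters). *)
Definition code (A B : Type) (X : point A -> Prop) (Y : point B -> Prop)
  (phi : point A -> point B) : Prop :=
  (forall x, X x -> Y (phi x)) /\
  (forall x, X x -> phi (shiftn 1 x) = shiftn 1 (phi x)) /\
  (forall x, X x -> forall k : nat, exists m : nat,
      forall x', X x' -> agree m x x' -> agree k (phi x) (phi x')).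

Definition open_in (A : Type) (X U : point A -> Prop) : Prop :=
  (forall x, U x -> X x) /\
  (forall x, U x -> exists k : nat, forall x', X x' -> agree k x x' -> U x').

Definition image (A B : Type) (phi : point A -> point B) (U : point A -> Prop) :
  point B -> Prop := fun y => exists x, U x /\ phi x = y.

Definition open_map (A B : Type) (X : point A -> Prop) (Y : point B -> Prop)
  (phi : point A -> point B) : Prop :=
  forall U, open_in X U -> open_in Y (image phi U).

Definition fiber_card (A B : Type) (X : point A -> Prop)
  (phi : point A -> point B) (y : point B) (n : nat) : Prop :=
  exists l : list (point A), NoDup l /\ length l = n /\
    forall x, (X x /\ phi x = y) <-> In x l.

Definition constant_to_one (A B : Type) (X : point A -> Prop)
  (Y : point B -> Prop) (phi : point A -> point B) : Prop :=
  exists n : nat, forall y, Y y -> fiber_card X phi y n.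

Definition left_asymptotic (A : Type) (x x' : point A) : Prop :=
  forall k : nat, exists N : nat, forall n : nat, (N <= n)%coq_nat ->
    agree k (shiftn (- Z.of_nat n) x) (shiftn (- Z.of_nat n) x').

Definition right_asymptotic (A : Type) (x x' : point A) : Prop :=
  forall k : nat, exists N : nat, forall n : nat, (N <= n)%coq_nat ->
    agree k (shiftn (Z.of_nat n) x) (shiftn (Z.of_nat n) x').

Definition right_closing (A B : Type) (X : point A -> Prop)
  (phi : point A -> point B) : Prop :=
  forall x x', X x -> X x' -> x <> x' -> left_asymptotic x x' -> phi x <> phi x'.

Definition left_closing (A B : Type) (X : point A -> Prop)
  (phi : point A -> point B) : Prop :=
  forall x x', X x -> X x' -> x <> x' -> right_asymptotic x x' -> phi x <> phi x'.

Definition bi_closing (A B : Type) (X : point A -> Prop)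
  (phi : point A -> point B) : Prop :=
  right_closing X phi /\ left_closing X phi.

(* Main.v *)
Require Import Defs.
From mathcomp Require Import all_boot.
From Stdlib Require Import ZArith List.
From Stdlib Require Import Lia Classical ClassicalEpsilon FunctionalExtensionality.
From mathcomp Require Import zify.
Set Implicit Arguments. Unset Strict Implicit. Unset Printing Implicit Defensive.

Lemma agree_mono (A : Type) k k' (x y : point A) :
  (k <= k')%coq_nat -> agree k' x y -> agree k x y.
Proof. intros Hk H i Hi; apply H; lia. Qed.

Lemma agree_sym (A : Type) k (x y : point A) : agree k x y -> agree k y x.
Proof. intros H i Hi; symmetry; auto. Qed.

Lemma agree_trans (A : Type) k (x y z : point A) :
  agree k x y -> agree k y z -> agree k x z.
Proof. intros H1 H2 i Hi; rewrite (H1 i Hi); auto. Qed.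

Lemma agree_refl (A : Type) k (x : point A) : agree k x x.
Proof. intros i _; reflexivity. Qed.

Lemma agree_all (A : Type) (x y : point A) : (forall k, agree k x y) -> x = y.
Proof.
  intros H; apply functional_extensionality; intros i.
  apply (H (Z.abs_nat i)); lia.
Qed.

Lemma neq_disagree (A : Type) (x y : point A) : x <> y -> exists k, ~ agree k x y.
Proof.
  intros H; apply NNPP; intros H'; apply H; apply agree_all; intros k.
  apply NNPP; intros H2; apply H'; exists k; exact H2.
Qed.

Lemma shiftn_add (A : Type) a b (x : point A) :
  shiftn a (shiftn b x) = shiftn (a + b) x.
Proof. apply functional_extensionality; intros i; unfold shiftn; f_equal; lia. Qed.

Lemma shiftn_0 (A : Type) (x : point A) : shiftn 0 x = x.
Proof. apply functional_extensionality; intros i; unfold shiftn; f_equal; lia. Qed.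

Definition Inf (P : nat -> Prop) := forall N, exists j, (N <= j)%coq_nat /\ P j.

Lemma in_In (T : eqType) (x : T) (s : list T) : x \in s -> In x s.
Proof.
  elim: s => [|a s IH] //. rewrite seq.in_cons => /orP [/eqP ->|H]; [left|right]; auto.
Qed.

Lemma pigeon_list (T : Type) (P : nat -> Prop) (f : nat -> T) (l : list T) :
  Inf (fun j => P j /\ In (f j) l) -> exists t, Inf (fun j => P j /\ f j = t).
Proof.
  induction l as [|a l IH]; intros H.
  - destruct (H 0) as [j [_ [_ []]]].
  - destruct (classic (Inf (fun j => P j /\ f j = a))) as [Ha|Ha].
    + exists a; exact Ha.
    + apply IH. apply not_all_ex_not in Ha. destruct Ha as [N0 HN0].
      intros N. destruct (H (Nat.max N N0)) as [j [Hj [HP Hin]]].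
      exists j; split; [lia|split; auto].
      destruct Hin as [Hin|Hin]; auto.
      exfalso; apply HN0; exists j; split; [lia|auto].
Qed.

Lemma pigeon (T : finType) (P : nat -> Prop) (f : nat -> T) :
  Inf P -> exists t, Inf (fun j => P j /\ f j = t).
Proof.
  intros H; apply (@pigeon_list T P f (enum T)).
  intros N; destruct (H N) as [j [Hj HP]]; exists j; repeat split; auto.
  apply in_In; rewrite mem_enum; done.
Qed.

Section Cl.
Definition clf (T : Type) (s : nat -> point T) (m j : nat) : T * T :=
  (s j (Z.of_nat m), s j (- Z.of_nat m)%Z).

Definition clchoose (T : finType) (s : nat -> point T) (P : nat -> Prop) (m : nat) : T * T :=
  epsilon (inhabits (s 0 0%Z, s 0 0%Z)) (fun t => Inf (fun j => P j /\ clf s m j = t)).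

Fixpoint clS (T : finType) (s : nat -> point T) (m : nat) : nat -> Prop :=
  match m with
  | 0 => fun _ => True
  | m'.+1 => fun j => clS s m' j /\ clf s m' j = clchoose s (clS s m') m'
  end.

Lemma clS_inf (T : finType) (s : nat -> point T) m : Inf (clS s m).
Proof.
  induction m as [|m IH].
  - intros N; exists N; simpl; split; auto.
  - simpl. unfold clchoose. apply (epsilon_spec (inhabits (s 0 0%Z, s 0 0%Z))
      (fun t => Inf (fun j => clS s m j /\ clf s m j = t))).
    apply pigeon; exact IH.
Qed.

Lemma clS_mono (T : finType) (s : nat -> point T) m d j : clS s (m + d) j -> clS s m j.
Proof.
  induction d as [|d IH]; intros H.
  - rewrite addn0 in H; exact H.
  - apply IH. rewrite addnS in H. simpl in H. tauto.
Qed.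

Definition clz (T : finType) (s : nat -> point T) : point T := fun i =>
  if (0 <=? i)%Z then (clchoose s (clS s (Z.to_nat i)) (Z.to_nat i)).1
  else (clchoose s (clS s (Z.to_nat (- i))) (Z.to_nat (- i))).2.

Lemma cluster (T : finType) (s : nat -> point T) :
  exists z : point T, forall K N, exists j, (N <= j)%coq_nat /\ agree K z (s j).
Proof.
  exists (clz s). intros K N. destruct (clS_inf s K.+1 N) as [j [Hj HS]].
  exists j; split; auto. intros i Hi. unfold clz.
  destruct (Z.leb_spec 0 i) as [Hi0|Hi0].
  - set m := Z.to_nat i.
    assert (H1 : clS s m.+1 j).
    { apply (clS_mono (d := K - m)). replace (m.+1 + (K - m)) with K.+1 by lia. exact HS. }
    simpl in H1. destruct H1 as [_ H1]. rewrite <- H1. unfold clf; simpl.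
    f_equal; lia.
  - set m := Z.to_nat (- i).
    assert (H1 : clS s m.+1 j).
    { apply (clS_mono (d := K - m)). replace (m.+1 + (K - m)) with K.+1 by lia. exact HS. }
    simpl in H1. destruct H1 as [_ H1]. rewrite <- H1. unfold clf; simpl.
    f_equal; lia.
Qed.
End Cl.

Lemma cluster_fam (A : finType) (n : nat) (s : nat -> 'I_n -> point A) :
  exists z : 'I_n -> point A, forall K N, exists j, (N <= j)%coq_nat /\
    forall a, agree K (z a) (s j a).
Proof.
  pose t := fun j => (fun i => [ffun a => s j a i]) : point {ffun 'I_n -> A}.
  destruct (cluster t) as [z Hz].
  exists (fun a i => z i a). intros K N. destruct (Hz K N) as [j [Hj Ha]].
  exists j; split; auto. intros a i Hi. rewrite (Ha i Hi). unfold t. rewrite ffunE. done.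
Qed.

Lemma cluster2 (A : finType) (s1 s2 : nat -> point A) :
  exists z1 z2, forall K N, exists j, (N <= j)%coq_nat /\
    agree K z1 (s1 j) /\ agree K z2 (s2 j).
Proof.
  pose t := fun j => (fun i => (s1 j i, s2 j i)) : point (A * A)%type.
  destruct (cluster t) as [z Hz].
  exists (fun i => (z i).1), (fun i => (z i).2). intros K N. destruct (Hz K N) as [j [Hj Ha]].
  exists j; split; auto. split; intros i Hi; rewrite (Ha i Hi); done.
Qed.

Lemma choice_nat (T : Type) (Q : nat -> T -> Prop) :
  (forall m, exists t, Q m t) -> exists f : nat -> T, forall m, Q m (f m).
Proof.
  intros H. exists (fun m => proj1_sig (constructive_indefinite_description _ (H m))).
  intros m. exact (proj2_sig (constructive_indefinite_description _ (H m))).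
Qed.

Lemma X_shift_nat (A : finType) (X : point A -> Prop) (HX : shift_space X) (n : nat) x :
  X x -> X (shiftn (Z.of_nat n) x) /\ X (shiftn (- Z.of_nat n) x).
Proof.
  intros Hx. induction n as [|n [IH1 IH2]].
  - simpl. rewrite shiftn_0. auto.
  - destruct HX as [_ Hi]. split.
    + replace (Z.of_nat n.+1) with (1 + Z.of_nat n)%Z by lia.
      rewrite <- shiftn_add. apply (Hi _ IH1).
    + replace (- Z.of_nat n.+1)%Z with (-1 + - Z.of_nat n)%Z by lia.
      rewrite <- shiftn_add. apply (Hi _ IH2).
Qed.

Lemma X_shift (A : finType) (X : point A -> Prop) (HX : shift_space X) (t : Z) x :
  X x -> X (shiftn t x).
Proof.
  intros Hx. destruct (Z.le_gt_cases 0 t) as [Ht|Ht].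
  - replace t with (Z.of_nat (Z.to_nat t)) by lia. apply X_shift_nat; auto.
  - replace t with (- Z.of_nat (Z.to_nat (- t)))%Z by lia. apply X_shift_nat; auto.
Qed.

Lemma phi_shift_nat (A B : finType) (X : point A -> Prop) (Y : point B -> Prop)
  (phi : point A -> point B) (HX : shift_space X) (Hc : code X Y phi) (n : nat) x :
  X x -> phi (shiftn (Z.of_nat n) x) = shiftn (Z.of_nat n) (phi x).
Proof.
  intros Hx. destruct Hc as [_ [Hs _]]. induction n as [|n IH].
  - simpl. rewrite !shiftn_0. auto.
  - replace (Z.of_nat n.+1) with (1 + Z.of_nat n)%Z by lia.
    rewrite <- !shiftn_add. rewrite Hs. rewrite IH; auto.
    apply X_shift; auto.
Qed.

Lemma phi_shift (A B : finType) (X : point A -> Prop) (Y : point B -> Prop)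
  (phi : point A -> point B) (HX : shift_space X) (Hc : code X Y phi) (t : Z) x :
  X x -> phi (shiftn t x) = shiftn t (phi x).
Proof.
  intros Hx. destruct (Z.le_gt_cases 0 t) as [Ht|Ht].
  - replace t with (Z.of_nat (Z.to_nat t)) by lia. apply (phi_shift_nat HX Hc); auto.
  - set n := Z.to_nat (- t).
    replace t with (- Z.of_nat n)%Z by lia.
    set u := shiftn (- Z.of_nat n) x.
    have Hu : X u by apply X_shift.
    have E := phi_shift_nat HX Hc n Hu.
    unfold u in E. rewrite shiftn_add in E. replace (Z.of_nat n + - Z.of_nat n)%Z with 0%Z in E by lia.
    rewrite shiftn_0 in E. rewrite E. rewrite shiftn_add.
    replace (- Z.of_nat n + Z.of_nat n)%Z with 0%Z by lia. rewrite shiftn_0. reflexivity.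
Qed.

Lemma phi_limit (A B : finType) (X : point A -> Prop) (Y : point B -> Prop)
  (phi : point A -> point B) (Hc : code X Y phi) z y :
  X z -> (forall m k, exists x, X x /\ agree m z x /\ agree k (phi x) y) -> phi z = y.
Proof.
  intros Hz H. apply agree_all; intros k.
  destruct Hc as [_ [_ Hcont]]. destruct (Hcont z Hz k) as [m Hm].
  destruct (H m k) as [x [Hx [H1 H2]]].
  apply agree_trans with (phi x); auto.
Qed.

Lemma rc_uniform (A B : finType) (X : point A -> Prop) (Y : point B -> Prop)
  (phi : point A -> point B) (HX : shift_space X) (Hc : code X Y phi) :
  right_closing X phi ->
  exists m, forall x x', X x -> X x' -> phi x = phi x' ->
    (forall i, (- Z.of_nat m <= i <= -1)%Z -> x i = x' i) -> x 0%Z = x' 0%Z.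
Proof.
  intros Hrc. apply NNPP; intros Hn.
  assert (H : forall m, exists p : point A * point A, X p.1 /\ X p.2 /\ phi p.1 = phi p.2 /\
     (forall i, (- Z.of_nat m <= i <= -1)%Z -> p.1 i = p.2 i) /\ p.1 0%Z <> p.2 0%Z).
  { intros m. apply NNPP; intros H1. apply Hn. exists m. intros x x' Hx Hx' Hp Ha.
    apply NNPP; intros H2. apply H1. exists (x, x'); simpl; auto. }
  destruct (choice_nat H) as [f Hf].
  destruct (cluster2 (fun j => (f j).1) (fun j => (f j).2)) as [z1 [z2 Hz]].
  destruct HX as [Hcl Hinv].
  assert (X1 : X z1).
  { apply Hcl. intros k. destruct (Hz k 0) as [j [_ [H1 _]]]. exists (f j).1.
    split; [apply Hf|auto]. }
  assert (X2 : X z2).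
  { apply Hcl. intros k. destruct (Hz k 0) as [j [_ [_ H2]]]. exists (f j).2.
    split; [apply Hf|auto]. }
  assert (Eneg : forall i, (i <= -1)%Z -> z1 i = z2 i).
  { intros i Hi. destruct (Hz (Z.abs_nat i) (Z.abs_nat i)) as [j [Hj [H1 H2]]].
    rewrite (H1 i ltac:(lia)) (H2 i ltac:(lia)). apply Hf; lia. }
  assert (D0 : z1 0%Z <> z2 0%Z).
  { destruct (Hz 0 0) as [j [_ [H1 H2]]].
    rewrite (H1 0%Z ltac:(lia)) (H2 0%Z ltac:(lia)). apply Hf. }
  assert (Ephi : phi z1 = phi z2).
  { apply (phi_limit Hc X1). intros m k.
    destruct Hc as [_ [_ Hcont]]. destruct (Hcont z2 X2 k) as [m2 Hm2].
    destruct (Hz (Nat.max m m2) 0) as [j [_ [H1 H2]]].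
    exists (f j).1. split; [apply Hf|split].
    - apply agree_mono with (Nat.max m m2); [lia|auto].
    - destruct (Hf j) as [_ [Hb [He _]]]. rewrite He. apply agree_sym. apply Hm2; auto.
      apply agree_mono with (Nat.max m m2); [lia|auto]. }
  apply (Hrc z1 z2 X1 X2).
  - intros E; apply D0; rewrite E; auto.
  - intros k. exists k.+1. intros n Hnn i Hi. unfold shiftn. apply Eneg. lia.
  - exact Ephi.
Qed.

Lemma lc_uniform (A B : finType) (X : point A -> Prop) (Y : point B -> Prop)
  (phi : point A -> point B) (HX : shift_space X) (Hc : code X Y phi) :
  left_closing X phi ->
  exists m, forall x x', X x -> X x' -> phi x = phi x' ->
    (forall i, (1 <= i <= Z.of_nat m)%Z -> x i = x' i) -> x 0%Z = x' 0%Z.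
Proof.
  intros Hrc. apply NNPP; intros Hn.
  assert (H : forall m, exists p : point A * point A, X p.1 /\ X p.2 /\ phi p.1 = phi p.2 /\
     (forall i, (1 <= i <= Z.of_nat m)%Z -> p.1 i = p.2 i) /\ p.1 0%Z <> p.2 0%Z).
  { intros m. apply NNPP; intros H1. apply Hn. exists m. intros x x' Hx Hx' Hp Ha.
    apply NNPP; intros H2. apply H1. exists (x, x'); simpl; auto. }
  destruct (choice_nat H) as [f Hf].
  destruct (cluster2 (fun j => (f j).1) (fun j => (f j).2)) as [z1 [z2 Hz]].
  destruct HX as [Hcl Hinv].
  assert (X1 : X z1).
  { apply Hcl. intros k. destruct (Hz k 0) as [j [_ [H1 _]]]. exists (f j).1.
    split; [apply Hf|auto]. }
  assert (X2 : X z2).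
  { apply Hcl. intros k. destruct (Hz k 0) as [j [_ [_ H2]]]. exists (f j).2.
    split; [apply Hf|auto]. }
  assert (Epos : forall i, (1 <= i)%Z -> z1 i = z2 i).
  { intros i Hi. destruct (Hz (Z.abs_nat i) (Z.abs_nat i)) as [j [Hj [H1 H2]]].
    rewrite (H1 i ltac:(lia)) (H2 i ltac:(lia)). apply Hf; lia. }
  assert (D0 : z1 0%Z <> z2 0%Z).
  { destruct (Hz 0 0) as [j [_ [H1 H2]]].
    rewrite (H1 0%Z ltac:(lia)) (H2 0%Z ltac:(lia)). apply Hf. }
  assert (Ephi : phi z1 = phi z2).
  { apply (phi_limit Hc X1). intros m k.
    destruct Hc as [_ [_ Hcont]]. destruct (Hcont z2 X2 k) as [m2 Hm2].
    destruct (Hz (Nat.max m m2) 0) as [j [_ [H1 H2]]].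
    exists (f j).1. split; [apply Hf|split].
    - apply agree_mono with (Nat.max m m2); [lia|auto].
    - destruct (Hf j) as [_ [Hb [He _]]]. rewrite He. apply agree_sym. apply Hm2; auto.
      apply agree_mono with (Nat.max m m2); [lia|auto]. }
  apply (Hrc z1 z2 X1 X2).
  - intros E; apply D0; rewrite E; auto.
  - intros k. exists k.+1. intros n Hnn i Hi. unfold shiftn. apply Epos. lia.
  - exact Ephi.
Qed.

Lemma sep_bc (A B : finType) (X : point A -> Prop) (Y : point B -> Prop)
  (phi : point A -> point B) (HX : shift_space X) (Hc : code X Y phi) :
  bi_closing X phi ->
  exists M, forall x x', X x -> X x' -> phi x = phi x' -> agree M x x' -> x = x'.
Proof.
  intros [Hr Hl]. destruct (rc_uniform HX Hc Hr) as [mr Hmr].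
  destruct (lc_uniform HX Hc Hl) as [ml Hml].
  exists (Nat.max mr ml). intros x x' Hx Hx' He Ha.
  set M := Nat.max mr ml.
  assert (R : forall n : nat, forall i, (- Z.of_nat M <= i <= Z.of_nat M + Z.of_nat n)%Z -> x i = x' i).
  { induction n as [|n IH].
    - intros i Hi; apply Ha; lia.
    - intros i Hi. destruct (Z.le_gt_cases i (Z.of_nat M + Z.of_nat n)) as [Hi2|Hi2].
      + apply IH; lia.
      + set t := i.
        have E := Hmr (shiftn t x) (shiftn t x') (X_shift HX t Hx) (X_shift HX t Hx').
        enough (HH : shiftn t x 0%Z = shiftn t x' 0%Z) by (unfold shiftn in HH; rewrite Z.add_0_l in HH; exact HH).
        apply E.
        * rewrite (phi_shift HX Hc t Hx) (phi_shift HX Hc t Hx') He; auto.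
        * intros i' Hi'. unfold shiftn. apply IH. lia. }
  assert (L : forall n : nat, forall i, (- Z.of_nat M - Z.of_nat n <= i <= Z.of_nat M)%Z -> x i = x' i).
  { induction n as [|n IH].
    - intros i Hi; apply Ha; lia.
    - intros i Hi. destruct (Z.le_gt_cases (- Z.of_nat M - Z.of_nat n) i) as [Hi2|Hi2].
      + apply IH; lia.
      + set t := i.
        have E := Hml (shiftn t x) (shiftn t x') (X_shift HX t Hx) (X_shift HX t Hx').
        enough (HH : shiftn t x 0%Z = shiftn t x' 0%Z) by (unfold shiftn in HH; rewrite Z.add_0_l in HH; exact HH).
        apply E.
        * rewrite (phi_shift HX Hc t Hx) (phi_shift HX Hc t Hx') He; auto.
        * intros i' Hi'. unfold shiftn. apply IH. lia. }
  apply functional_extensionality; intros i.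
  destruct (Z.le_gt_cases 0 i).
  - apply (R (Z.to_nat i)); lia.
  - apply (L (Z.to_nat (- i))); lia.
Qed.

Lemma In_in (T : eqType) (x : T) (s : list T) : In x s -> x \in s.
Proof.
  elim: s => [|a s IH] //= [->|H]; rewrite seq.in_cons; apply/orP; [left|right]; auto.
Qed.

Lemma uniq_NoDup (T : eqType) (s : list T) : uniq s -> NoDup s.
Proof.
  elim: s => [|a s IH] /=; first by constructor.
  move/andP=> [Ha Hs]. constructor; last by apply IH.
  intros H. move: Ha. rewrite (In_in H). done.
Qed.

Lemma size_length (T : Type) (s : list T) : size s = length s.
Proof. elim: s => [|a s IH] //=. Qed.

Lemma enum_ord_facts k : NoDup (enum 'I_k) /\ length (enum 'I_k) = k /\
  forall a, In a (enum 'I_k).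
Proof.
  split; [apply uniq_NoDup; apply enum_uniq|split].
  - rewrite -size_length size_enum_ord. done.
  - intros a; apply in_In. rewrite mem_enum. done.
Qed.

Lemma map_ord_NoDup (T : Type) k (z : 'I_k -> T) :
  (forall a b, z a = z b -> a = b) -> NoDup (map z (enum 'I_k)) /\ length (map z (enum 'I_k)) = k.
Proof.
  intros Hz. destruct (enum_ord_facts k) as [H1 [H2 H3]]. split.
  - apply NoDup_map_NoDup_ForallPairs; auto. intros a b _ _; apply Hz.
  - rewrite length_map; auto.
Qed.

Lemma count_le (T : Type) (l1 l2 : list T) :
  NoDup l1 -> (forall x, In x l1 -> In x l2) -> (length l1 <= length l2)%coq_nat.
Proof. intros H1 H2. apply NoDup_incl_length; auto. Qed.

Lemma fiber_card_unique (A B : Type) (X : point A -> Prop) (phi : point A -> point B) y n n' :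
  fiber_card X phi y n -> fiber_card X phi y n' -> n = n'.
Proof.
  intros [l [Hl [Hn Hi]]] [l' [Hl' [Hn' Hi']]].
  have H1 := count_le Hl (fun x Hx => proj1 (Hi' x) (proj2 (Hi x) Hx)).
  have H2 := count_le Hl' (fun x Hx => proj1 (Hi x) (proj2 (Hi' x) Hx)).
  lia.
Qed.

Lemma sep_point (A : Type) (a : point A) (l : list (point A)) :
  exists R, forall v, In v l -> agree R a v -> a = v.
Proof.
  induction l as [|b l [R IH]].
  - exists 0; intros v [].
  - destruct (classic (a = b)) as [E|E].
    + exists R. intros v [<-|Hv] Ha; auto.
    + destruct (neq_disagree E) as [k Hk]. exists (Nat.max k R).
      intros v [<-|Hv] Ha.
      * exfalso; apply Hk; apply agree_mono with (Nat.max k R); [lia|auto].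
      * apply IH; auto. apply agree_mono with (Nat.max k R); [lia|auto].
Qed.

Lemma list_sep (A : Type) (l : list (point A)) :
  exists R, forall u v, In u l -> In v l -> agree R u v -> u = v.
Proof.
  induction l as [|a l [R IH]].
  - exists 0; intros u v [].
  - destruct (sep_point a l) as [R1 H1]. exists (Nat.max R R1).
    intros u v [<-|Hu] [<-|Hv] Ha; auto.
    + apply H1; auto. apply agree_mono with (Nat.max R R1); [lia|auto].
    + symmetry. apply H1; auto. apply agree_sym. apply agree_mono with (Nat.max R R1); [lia|auto].
    + apply IH; auto. apply agree_mono with (Nat.max R R1); [lia|auto].
Qed.

Lemma uniform_K (T : Type) (L : list T) (Q : nat -> T -> Prop) :
  (forall k k' w, Q k w -> (k <= k')%coq_nat -> Q k' w) ->
  (forall w, In w L -> exists k, Q k w) -> exists K, forall w, In w L -> Q K w.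
Proof.
  intros Hm. induction L as [|a L IH]; intros H.
  - exists 0; intros w [].
  - destruct (H a (or_introl (erefl a))) as [k Hk].
    destruct IH as [K HK]. { intros w Hw; apply H; right; auto. }
    exists (Nat.max k K). intros w [<-|Hw].
    + apply Hm with k; auto; lia.
    + apply Hm with K; auto; lia.
Qed.

Lemma fiber_limit (A B : finType) (X : point A -> Prop) (Y : point B -> Prop)
  (phi : point A -> point B) (HX : shift_space X) (Hc : code X Y phi) M
  (Hsep : forall x x', X x -> X x' -> phi x = phi x' -> agree M x x' -> x = x')
  n y (ys : nat -> point B) (Hys : forall j, agree j (ys j) y)
  (s : nat -> 'I_n -> point A) (Hs : forall j a, X (s j a) /\ phi (s j a) = ys j)
  (Hd : forall j a b, s j a = s j b -> a = b) :
  exists z : 'I_n -> point A, (forall a, X (z a) /\ phi (z a) = y) /\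
    (forall a b, z a = z b -> a = b) /\
    (forall K N, exists j, (N <= j)%coq_nat /\ forall a, agree K (z a) (s j a)).
Proof.
  destruct (cluster_fam s) as [z Hz]. exists z.
  assert (HXz : forall a, X (z a)).
  { intros a. destruct HX as [Hcl _]. apply Hcl. intros k.
    destruct (Hz k 0) as [j [_ Hj]]. exists (s j a); split; [apply Hs|apply Hj]. }
  split; [|split; [|exact Hz]].
  - intros a. split; auto. apply (phi_limit Hc (HXz a)). intros m k.
    destruct (Hz m k) as [j [Hj Ha]]. exists (s j a). split; [apply Hs|split; auto].
    destruct (Hs j a) as [_ ->]. apply agree_mono with j; auto.
  - intros a b E. destruct (Hz M 0) as [j [_ Hj]].
    apply (Hd j). apply Hsep; try apply Hs.
    + destruct (Hs j a) as [_ ->]; destruct (Hs j b) as [_ ->]; auto.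
    + apply agree_trans with (z a). apply agree_sym; auto. rewrite E; auto.
Qed.

Lemma open_lift (A B : finType) (X : point A -> Prop) (Y : point B -> Prop)
  (phi : point A -> point B) (Hc : code X Y phi) (Ho : open_map X Y phi)
  (L : list (point A)) R y (HL : forall w, In w L -> X w /\ phi w = y) :
  exists K, forall y', Y y' -> agree K y y' ->
    exists p : point A -> point A, forall w, In w L -> X (p w) /\ agree R w (p w) /\ phi (p w) = y'.
Proof.
  assert (H : exists K, forall w, In w L -> forall y', Y y' -> agree K y y' ->
            exists q, X q /\ agree R w q /\ phi q = y').
  { apply uniform_K.
    - intros k k' w H Hk y' Hy' Ha. apply H; auto. apply agree_mono with k'; auto.
    - intros w Hw. destruct (HL w Hw) as [Xw Ew].
      pose U := fun q => X q /\ agree R w q.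
      assert (HU : open_in X U).
      { split. intros q [Hq _]; auto.
        intros q [Hq Hwq]. exists R. intros q' Hq' Ha. split; auto.
        apply agree_trans with q; auto. }
      destruct (Ho U HU) as [_ HO]. destruct (HO y) as [K HK].
      { exists w. split; auto. split; auto. apply agree_refl. }
      exists K. intros y' Hy' Ha. destruct (HK y' Hy' Ha) as [q [[Hq1 Hq2] Hq3]].
      exists q; auto. }
  destruct H as [K HK]. exists K. intros y' Hy' Ha.
  exists (fun w => epsilon (inhabits w) (fun q => X q /\ agree R w q /\ phi q = y')).
  intros w Hw. apply (epsilon_spec (inhabits w) (fun q => X q /\ agree R w q /\ phi q = y')).
  apply HK; auto.
Qed.

Lemma dir_open (A B : finType) (X : point A -> Prop) (Y : point B -> Prop)
  (phi : point A -> point B) (HX : shift_space X) (Hc : code X Y phi) :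
  constant_to_one X Y phi -> bi_closing X phi -> open_map X Y phi.
Proof.
  intros [n Hn] Hbc. destruct (sep_bc HX Hc Hbc) as [M Hsep].
  have HcY := proj1 Hc.
  intros U [HUX HUo]. split.
  - intros y [x [Hx <-]]. apply HcY; auto.
  - intros y [x [Hux <-]]. destruct (HUo x Hux) as [k Hk].
    have Xx := HUX x Hux.
    apply NNPP; intro Hno.
    assert (H1 : forall K, exists p : point B * list (point A), Y p.1 /\ agree K p.1 (phi x) /\
      ~ Defs.image phi U p.1 /\ NoDup p.2 /\ length p.2 = n /\
      forall x', (X x' /\ phi x' = p.1) <-> In x' p.2).
    { intros K. apply NNPP; intro H2. apply Hno. exists K. intros y' Hy' Ha.
      apply NNPP; intro H3. destruct (Hn y' Hy') as [l [Hl [Hln Hli]]]. apply H2.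
      exists (y', l). simpl. split; auto. split; [apply agree_sym; auto|auto]. }
    destruct (choice_nat H1) as [f Hf].
    pose s := fun j (a : 'I_n) => nth a (f j).2 x.
    assert (Hs : forall j a, X (s j a) /\ phi (s j a) = (f j).1).
    { intros j a. destruct (Hf j) as [_ [_ [_ [_ [Hln Hli]]]]]. apply Hli.
      apply nth_In. rewrite Hln. have := ltn_ord a. lia. }
    assert (Hd : forall j a b, s j a = s j b -> a = b).
    { intros j a b E. destruct (Hf j) as [_ [_ [_ [Hl [Hln _]]]]].
      apply val_inj. apply (proj1 (NoDup_nth _ x) Hl); auto.
      - rewrite Hln. exact (elimTF ltP (ltn_ord a)).
      - rewrite Hln. exact (elimTF ltP (ltn_ord b)). }
    destruct (fiber_limit HX Hc Hsep (y := phi x) (fun j => proj1 (proj2 (Hf j))) Hs Hd)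
      as [z [Hz1 [Hz2 Hz3]]].
    destruct (Hn (phi x) (HcY x Xx)) as [l [Hl [Hln Hli]]].
    destruct (map_ord_NoDup Hz2) as [Hm1 Hm2].
    assert (Hincl : incl (map z (enum 'I_n)) l).
    { intros w Hw. apply in_map_iff in Hw. destruct Hw as [a [<- _]]. apply Hli; apply Hz1. }
    assert (Hlen : (length l <= length (map z (enum 'I_n)))%coq_nat) by lia.
    have Hincl2 := NoDup_length_incl Hm1 Hlen Hincl.
    assert (Hin : In x (map z (enum 'I_n))) by (apply Hincl2; apply Hli; auto).
    apply in_map_iff in Hin. destruct Hin as [a [Ea _]].
    destruct (Hz3 k 0) as [j [_ Hj]].
    destruct (Hf j) as [_ [_ [Hni _]]]. apply Hni.
    exists (s j a). split; [|apply Hs].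
    apply Hk; [apply Hs|]. rewrite <- Ea. apply Hj.
Qed.

Lemma shiftn_inj (A : Type) t (x x' : point A) : shiftn t x = shiftn t x' -> x = x'.
Proof.
  intros E. have := f_equal (shiftn (- t)) E. rewrite !shiftn_add.
  replace (- t + t)%Z with 0%Z by lia. rewrite !shiftn_0. auto.
Qed.

Lemma closing_core (A B : finType) (X : point A -> Prop) (Y : point B -> Prop)
  (phi : point A -> point B) (HX : shift_space X) (Hc : code X Y phi)
  (Ho : open_map X Y phi) n (Hn : forall y, Y y -> fiber_card X phi y n)
  (sg : Z) x x' (Xx : X x) (Xx' : X x') (Hne : x <> x') (He : phi x = phi x')
  (Has : forall k, exists N, forall m : nat, (N <= m)%coq_nat ->
     agree k (shiftn (sg * Z.of_nat m) x) (shiftn (sg * Z.of_nat m) x')) : False.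
Proof.
  have HcY := proj1 Hc.
  have Hcont := proj2 (proj2 Hc).
  set y := phi x.
  destruct (Hn y (HcY x Xx)) as [l [Hl [Hln Hli]]].
  destruct (In_nth l x x (proj1 (Hli x) (conj Xx erefl))) as [ix [Hix Eix]].
  destruct (In_nth l x' x (proj1 (Hli x') (conj Xx' (esym He)))) as [ix' [Hix' Eix']].
  have Hix2 : ix < n by apply/ltP; lia.
  have Hix2' : ix' < n by apply/ltP; lia.
  set oix := Ordinal Hix2. set oix' := Ordinal Hix2'.
  assert (Hnth : forall a : 'I_n, X (nth a l x) /\ phi (nth a l x) = y).
  { intros a. apply Hli. apply nth_In. rewrite Hln. exact (elimTF ltP (ltn_ord a)). }
  pose s := fun j (a : 'I_n) => shiftn (sg * Z.of_nat j) (nth a l x).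
  assert (Hs : forall j a, X (s j a) /\ phi (s j a) = shiftn (sg * Z.of_nat j) y).
  { intros j a. destruct (Hnth a) as [H1 H2]. split.
    - apply X_shift; auto.
    - unfold s. rewrite (phi_shift HX Hc _ H1) H2. auto. }
  destruct (cluster_fam s) as [z Hz].
  assert (HXz : forall a, X (z a)).
  { intros a. destruct HX as [Hcl _]. apply Hcl. intros k.
    destruct (Hz k 0) as [j [_ Hj]]. exists (s j a); split; [apply Hs|apply Hj]. }
  assert (Ez : z oix = z oix').
  { apply agree_all; intros k. destruct (Has k) as [N HN].
    destruct (Hz k N) as [j [Hj Ha]].
    apply agree_trans with (s j oix); [apply Ha|].
    apply agree_trans with (s j oix'); [|apply agree_sym; apply Ha].
    unfold s; simpl. rewrite Eix Eix'. apply HN; auto. }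
  set ystar := phi (z oix).
  assert (Ephi : forall a, phi (z a) = ystar).
  { intros a. apply (phi_limit Hc (HXz a)). intros m k.
    destruct (Hcont (z oix) (HXz oix) k) as [m2 Hm2].
    destruct (Hz (Nat.max m m2) 0) as [j [_ Hj]].
    exists (s j a). split; [apply Hs|split].
    - apply agree_mono with (Nat.max m m2); [lia|apply Hj].
    - destruct (Hs j a) as [_ ->]. destruct (Hs j oix) as [X3 <-].
      apply agree_sym. apply Hm2; auto. apply agree_mono with (Nat.max m m2); [lia|apply Hj]. }
  have Yst : Y ystar by apply HcY; apply HXz.
  destruct (Hn ystar Yst) as [L [HL [HLn HLi]]].
  destruct (list_sep L) as [R HR].
  destruct (open_lift Hc Ho R (L := L) (y := ystar)) as [K HK].
  { intros w Hw; apply HLi; auto. }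
  destruct (Hcont (z oix) (HXz oix) K) as [m3 Hm3].
  destruct (Hz (Nat.max R m3) 0) as [j [_ Hj]].
  set yj := phi (s j oix).
  have Yj : Y yj by apply HcY; apply Hs.
  destruct (HK yj Yj) as [p Hp].
  { apply Hm3; [apply Hs|]. apply agree_mono with (Nat.max R m3); [lia|apply Hj]. }
  set w0 := z oix.
  have Hw0 : In w0 L by apply HLi; split; [apply HXz|reflexivity].
  destruct (in_split w0 L Hw0) as [L1 [L2 EL]].
  have HL12 : NoDup (L1 ++ L2) by (apply (NoDup_remove_1 L1 L2 w0); rewrite <- EL; auto).
  have Hnot : ~ In w0 (L1 ++ L2) by (apply (NoDup_remove_2 L1 L2 w0); rewrite <- EL; auto).
  have Hsub : forall w, In w (L1 ++ L2) -> In w L.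
  { intros w Hw. rewrite EL. apply in_app_or in Hw. apply in_or_app. destruct Hw; [left|right; right]; auto. }
  have HjR : forall a, agree R (z a) (s j a).
  { intros a. apply agree_mono with (Nat.max R m3); [lia|apply Hj]. }
  have Hpw : forall w, In w (L1 ++ L2) -> agree R w0 (p w) -> False.
  { intros w Hw Ha. apply Hnot. replace w0 with w; auto.
    apply HR; auto. apply agree_trans with (p w). apply (Hp w (Hsub w Hw)). apply agree_sym; auto. }
  pose l2 := s j oix :: s j oix' :: map p (L1 ++ L2).
  assert (Hl2 : NoDup l2).
  { constructor; [|constructor].
    - intros [E|E].
      + apply Hne. rewrite <- Eix, <- Eix'. apply shiftn_inj in E. symmetry. exact E.
      + apply in_map_iff in E. destruct E as [w [Ew Hw]]. apply (Hpw w Hw). rewrite Ew. apply HjR.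
    - intros E. apply in_map_iff in E. destruct E as [w [Ew Hw]]. apply (Hpw w Hw). rewrite Ew.
      unfold w0; rewrite Ez. apply HjR.
    - apply NoDup_map_NoDup_ForallPairs; auto. intros a b Ha Hb E.
      apply HR; try apply Hsub; auto. apply agree_trans with (p a). apply (Hp a (Hsub a Ha)).
      rewrite E. apply agree_sym. apply (Hp b (Hsub b Hb)). }
  destruct (Hn yj Yj) as [l3 [Hl3 [Hl3n Hl3i]]].
  assert (Hin : forall v, In v l2 -> In v l3).
  { intros v Hv. apply Hl3i. destruct Hv as [<-|[<-|Hv]].
    - split; [apply Hs|reflexivity].
    - split; [apply Hs|]. unfold yj. destruct (Hs j oix) as [_ ->]. destruct (Hs j oix') as [_ ->]. auto.
    - apply in_map_iff in Hv. destruct Hv as [w [<- Hw]]. destruct (Hp w (Hsub w Hw)) as [H1 [_ H3]]. auto. }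
  have Hc1 := count_le Hl2 Hin.
  have HlenL := f_equal (@length _) EL. rewrite length_app in HlenL. simpl in HlenL.
  unfold l2 in Hc1. simpl in Hc1. rewrite length_map length_app in Hc1. lia.
Qed.

Lemma dir_bc (A B : finType) (X : point A -> Prop) (Y : point B -> Prop)
  (phi : point A -> point B) (HX : shift_space X) (Hc : code X Y phi) :
  open_map X Y phi -> constant_to_one X Y phi -> bi_closing X phi.
Proof.
  intros Ho [n Hn]. split.
  - intros x x' Xx Xx' Hne Has He. apply (closing_core HX Hc Ho Hn (sg := (-1)%Z) Xx Xx' Hne He).
    intros k. destruct (Has k) as [N HN]. exists N. intros m Hm.
    replace (-1 * Z.of_nat m)%Z with (- Z.of_nat m)%Z by lia. auto.
  - intros x x' Xx Xx' Hne Has He. apply (closing_core HX Hc Ho Hn (sg := 1%Z) Xx Xx' Hne He).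
    intros k. destruct (Has k) as [N HN]. exists N. intros m Hm.
    replace (1 * Z.of_nat m)%Z with (Z.of_nat m)%Z by lia. auto.
Qed.

Lemma nodup_exists (T : Type) (l : list T) :
  exists l', NoDup l' /\ forall x, In x l <-> In x l'.
Proof.
  induction l as [|a l [l' [H1 H2]]].
  - exists nil; split; [constructor|tauto].
  - destruct (classic (In a l')) as [Ha|Ha].
    + exists l'; split; auto. intros x; split.
      * intros [<-|Hx]; auto. apply H2; auto.
      * intros Hx; right; apply H2; auto.
    + exists (a :: l'); split; [constructor; auto|]. intros x; split.
      * intros [<-|Hx]; [left; auto|right; apply H2; auto].
      * intros [<-|Hx]; [left; auto|right; apply H2; auto].
Qed.

Definition pat (A : finType) M (x : point A) : {ffun 'I_(2 * M + 1) -> A} :=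
  [ffun i : 'I_(2 * M + 1) => x (Z.of_nat i - Z.of_nat M)%Z].

Lemma pat_agree (A : finType) M (x x' : point A) : pat M x = pat M x' -> agree M x x'.
Proof.
  intros E i Hi. set k := Z.to_nat (i + Z.of_nat M).
  have hk : k < 2 * M + 1 by apply/ltP; lia.
  have := congr1 (fun f : {ffun _ -> A} => f (Ordinal hk)) E. rewrite /pat !ffunE /=.
  replace (Z.of_nat k - Z.of_nat M)%Z with i by lia. auto.
Qed.

Lemma fiber_exists (A B : finType) (X : point A -> Prop) (phi : point A -> point B) M
  (Hsep : forall x x', X x -> X x' -> phi x = phi x' -> agree M x x' -> x = x') y :
  exists n, fiber_card X phi y n.
Proof.
  destruct (classic (exists x0, X x0 /\ phi x0 = y)) as [[x0 Hx0]|Hne].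
  - pose P := fun q x => X x /\ phi x = y /\
       ((exists x', X x' /\ phi x' = y /\ pat M x' = q) -> pat M x = q).
    pose F := fun q => epsilon (inhabits x0) (P q).
    assert (HF : forall q, P q (F q)).
    { intros q. apply (epsilon_spec (inhabits x0) (P q)).
      destruct (classic (exists x', X x' /\ phi x' = y /\ pat M x' = q)) as [[x' Hx']|Hn].
      - exists x'. unfold P. tauto.
      - exists x0. unfold P. tauto. }
    destruct (nodup_exists (map F (enum {ffun 'I_(2 * M + 1) -> A}))) as [l [Hl Hli]].
    exists (length l). exists l. split; auto. split; auto. intros x; split.
    + intros [Hx Ex]. apply Hli. apply in_map_iff. exists (pat M x). split.
      * destruct (HF (pat M x)) as [H1 [H2 H3]]. apply Hsep; auto.
        { rewrite H2; auto. }
        apply pat_agree. apply H3. exists x; auto.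
      * apply in_In. rewrite mem_enum. done.
    + intros Hx. apply Hli in Hx. apply in_map_iff in Hx. destruct Hx as [q [<- _]].
      destruct (HF q) as [H1 [H2 _]]. auto.
  - exists 0, nil. split; [constructor|split; auto]. intros x; split; [|intros []].
    intros H; apply Hne; exists x; auto.
Qed.

Lemma fc_lower (A B : finType) (X : point A -> Prop) (Y : point B -> Prop)
  (phi : point A -> point B) (Hc : code X Y phi) (Ho : open_map X Y phi) y n :
  fiber_card X phi y n ->
  exists K, forall y', Y y' -> agree K y y' -> forall n', fiber_card X phi y' n' -> (n <= n')%coq_nat.
Proof.
  intros [L [HL [HLn HLi]]]. destruct (list_sep L) as [R HR].
  destruct (open_lift Hc Ho R (L := L) (y := y)) as [K HK].
  { intros w Hw; apply HLi; auto. }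
  exists K. intros y' Hy' Ha n' [L' [HL' [HL'n HL'i]]].
  destruct (HK y' Hy' Ha) as [p Hp].
  assert (Hm : NoDup (map p L)).
  { apply NoDup_map_NoDup_ForallPairs; auto. intros a b Ha' Hb E.
    apply HR; auto. apply agree_trans with (p a). apply (Hp a Ha').
    rewrite E. apply agree_sym. apply (Hp b Hb). }
  assert (Hin : forall v, In v (map p L) -> In v L').
  { intros v Hv. apply HL'i. apply in_map_iff in Hv. destruct Hv as [w [<- Hw]].
    destruct (Hp w Hw) as [H1 [_ H3]]. auto. }
  have := count_le Hm Hin.
  rewrite length_map. lia.
Qed.

Lemma fc_upper (A B : finType) (X : point A -> Prop) (Y : point B -> Prop)
  (phi : point A -> point B) (HX : shift_space X) (Hc : code X Y phi) M
  (Hsep : forall x x', X x -> X x' -> phi x = phi x' -> agree M x x' -> x = x') y n :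
  fiber_card X phi y n ->
  exists K, forall y', Y y' -> agree K y y' -> forall n', fiber_card X phi y' n' -> (n' <= n)%coq_nat.
Proof.
  intros [L [HL [HLn HLi]]]. apply NNPP; intros Hno.
  assert (H1 : forall K, exists p : point B * list (point A), agree K p.1 y /\
      NoDup p.2 /\ (n < length p.2)%coq_nat /\
      forall x', (X x' /\ phi x' = p.1) <-> In x' p.2).
  { intros K. apply NNPP; intro H2. apply Hno. exists K. intros y' Hy' Ha n' Hn'.
    apply NNPP; intro H3. destruct Hn' as [l [Hl [Hln Hli]]]. apply H2.
    exists (y', l). simpl. split; [apply agree_sym; auto|]. split; auto. split; auto. lia. }
  destruct (choice_nat H1) as [f Hf].
  assert (Hd0 : exists d0 : point A, True).
  { destruct (Hf 0) as [_ [_ [Hlen _]]]. destruct ((f 0).2) as [|d0 rest].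
    - simpl in Hlen; lia.
    - exists d0; auto. }
  destruct Hd0 as [d0 _].
  pose s := fun j (a : 'I_(n.+1)) => nth a (f j).2 d0.
  assert (Hs : forall j a, X (s j a) /\ phi (s j a) = (f j).1).
  { intros j a. destruct (Hf j) as [_ [_ [Hln Hli]]]. apply Hli.
    apply nth_In. have := elimTF ltP (ltn_ord a). lia. }
  assert (Hd : forall j a b, s j a = s j b -> a = b).
  { intros j a b E. destruct (Hf j) as [_ [Hl [Hln _]]].
    apply val_inj. apply (proj1 (NoDup_nth _ d0) Hl); auto.
    - have := elimTF ltP (ltn_ord a). simpl. lia.
    - have := elimTF ltP (ltn_ord b). simpl. lia. }
  destruct (fiber_limit HX Hc Hsep (y := y) (fun j => proj1 (Hf j)) Hs Hd)
    as [z [Hz1 [Hz2 Hz3]]].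
  destruct (map_ord_NoDup Hz2) as [Hm1 Hm2].
  assert (Hin : forall v, In v (map z (enum 'I_n.+1)) -> In v L).
  { intros v Hv. apply in_map_iff in Hv. destruct Hv as [a [<- _]]. apply HLi; apply Hz1. }
  have := count_le Hm1 Hin.
  lia.
Qed.

Lemma fc_local (A B : finType) (X : point A -> Prop) (Y : point B -> Prop)
  (phi : point A -> point B) (HX : shift_space X) (Hc : code X Y phi) (Ho : open_map X Y phi) M
  (Hsep : forall x x', X x -> X x' -> phi x = phi x' -> agree M x x' -> x = x') y n :
  fiber_card X phi y n ->
  exists K, forall y', Y y' -> agree K y y' -> fiber_card X phi y' n.
Proof.
  intros Hf. destruct (fc_lower Hc Ho Hf) as [K1 H1].
  destruct (fc_upper HX Hc Hsep Hf) as [K2 H2].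
  exists (Nat.max K1 K2). intros y' Hy' Ha.
  destruct (fiber_exists Hsep y') as [n' Hn'].
  have A1 : agree K1 y y' by apply agree_mono with (Nat.max K1 K2); [lia|auto].
  have A2 : agree K2 y y' by apply agree_mono with (Nat.max K1 K2); [lia|auto].
  have := H1 y' Hy' A1 n' Hn'.
  have := H2 y' Hy' A2 n' Hn'.
  intros. replace n with n' by lia. auto.
Qed.

Lemma fc_shift (A B : finType) (X : point A -> Prop) (Y : point B -> Prop)
  (phi : point A -> point B) (HX : shift_space X) (Hc : code X Y phi) y n t :
  fiber_card X phi y n -> fiber_card X phi (shiftn t y) n.
Proof.
  intros [l [Hl [Hln Hli]]]. exists (map (shiftn t) l). split; [|split].
  - apply NoDup_map_NoDup_ForallPairs; auto. intros a b _ _; apply shiftn_inj.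
  - rewrite length_map; auto.
  - intros x; split.
    + intros [Hx Ex]. apply in_map_iff. exists (shiftn (- t) x). split.
      * rewrite shiftn_add. replace (t + - t)%Z with 0%Z by lia. apply shiftn_0.
      * apply Hli. split; [apply X_shift; auto|]. rewrite (phi_shift HX Hc _ Hx) Ex shiftn_add.
        replace (- t + t)%Z with 0%Z by lia. apply shiftn_0.
    + intros Hx. apply in_map_iff in Hx. destruct Hx as [u [<- Hu]]. apply Hli in Hu.
      destruct Hu as [Hu Eu]. split; [apply X_shift; auto|]. rewrite (phi_shift HX Hc _ Hu) Eu. auto.
Qed.

Definition word (B : Type) (y : point B) (K : nat) : list B :=
  map (fun t => y (Z.of_nat t - Z.of_nat K)%Z) (seq 0 (2 * K + 1)).

Lemma word_len (B : Type) (y : point B) K : length (word y K) = (2 * K + 1)%coq_nat.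
Proof. unfold word. rewrite length_map length_seq. lia. Qed.

Lemma word_nth (B : Type) (y : point B) K j d :
  (j < 2 * K + 1)%coq_nat -> nth j (word y K) d = y (Z.of_nat j - Z.of_nat K)%Z.
Proof.
  intros Hj. unfold word.
  rewrite (nth_indep _ d (y (Z.of_nat 0 - Z.of_nat K)%Z)).
  2:{ rewrite length_map length_seq. lia. }
  rewrite (map_nth (fun t => y (Z.of_nat t - Z.of_nat K)%Z)). rewrite seq_nth. 2:lia.
  f_equal.
Qed.

Lemma word_occurs (B : Type) (Y : point B -> Prop) y K : Y y -> occurs Y (word y K).
Proof.
  intros Hy. exists y. split; auto. exists (- Z.of_nat K)%Z. intros j Hj d.
  rewrite word_len in Hj. rewrite word_nth; [f_equal; lia|lia].
Qed.

Lemma irr_const (A B : finType) (X : point A -> Prop) (Y : point B -> Prop)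
  (phi : point A -> point B) (HX : shift_space X) (HY : shift_space Y) (Hirr : irreducible Y)
  (Hc : code X Y phi)
  (Hloc : forall y n, Y y -> fiber_card X phi y n ->
     exists K, forall y', Y y' -> agree K y y' -> fiber_card X phi y' n)
  y1 y2 n1 n2 : Y y1 -> Y y2 -> fiber_card X phi y1 n1 -> fiber_card X phi y2 n2 -> n1 = n2.
Proof.
  intros Y1 Y2 F1 F2.
  destruct (Hloc y1 n1 Y1 F1) as [K1 HK1].
  destruct (Hloc y2 n2 Y2 F2) as [K2 HK2].
  set u := word y1 K1. set v := word y2 K2.
  destruct (Hirr u v (word_occurs K1 Y1) (word_occurs K2 Y2)) as [w [z [Yz [i Hz]]]].
  have Lu : length u = (2 * K1 + 1)%coq_nat by apply word_len.
  have Lv : length v = (2 * K2 + 1)%coq_nat by apply word_len.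
  have Luwv : length (u ++ w ++ v) = (length u + length w + length v)%coq_nat
    by rewrite !length_app; lia.
  set t1 := (i + Z.of_nat K1)%Z.
  assert (A1 : agree K1 y1 (shiftn t1 z)).
  { intros t Ht. unfold shiftn. set j := Z.to_nat (t + Z.of_nat K1).
    have Hj : (j < length u)%coq_nat by (unfold j; lia).
    have := Hz j ltac:(lia) (y1 0%Z). rewrite app_nth1; auto. unfold u. rewrite word_nth; [|lia].
    replace (Z.of_nat j - Z.of_nat K1)%Z with t by lia.
    replace (t + t1)%Z with (i + Z.of_nat j)%Z by lia. auto. }
  have F1' := HK1 (shiftn t1 z) (X_shift HY t1 Yz) A1.
  have F1z := fc_shift HX Hc (- t1) F1'.
  rewrite shiftn_add in F1z. replace (- t1 + t1)%Z with 0%Z in F1z by lia. rewrite shiftn_0 in F1z.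
  set t2 := (i + Z.of_nat (length u) + Z.of_nat (length w) + Z.of_nat K2)%Z.
  assert (A2 : agree K2 y2 (shiftn t2 z)).
  { intros t Ht. unfold shiftn. set j0 := Z.to_nat (t + Z.of_nat K2).
    set j := (length u + length w + j0)%coq_nat.
    have Hjl : (j < length (u ++ w ++ v))%coq_nat by (unfold j, j0; lia).
    have := Hz j Hjl (y1 0%Z). rewrite app_nth2; [|unfold j; lia]. rewrite app_nth2; [|unfold j; lia].
    unfold v. rewrite word_nth; [|unfold j, j0; lia].
    replace (t + t2)%Z with (i + Z.of_nat j)%Z by (unfold j, j0, t2; lia).
    intros E; rewrite E; f_equal. unfold j, j0; lia. }
  have F2' := HK2 (shiftn t2 z) (X_shift HY t2 Yz) A2.
  have F2z := fc_shift HX Hc (- t2) F2'.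
  rewrite shiftn_add in F2z. replace (- t2 + t2)%Z with 0%Z in F2z by lia. rewrite shiftn_0 in F2z.
  exact (fiber_card_unique F1z F2z).
Qed.

Lemma dir_const (A B : finType) (X : point A -> Prop) (Y : point B -> Prop)
  (phi : point A -> point B) (HX : shift_space X) (HY : shift_space Y) (Hirr : irreducible Y)
  (Hc : code X Y phi) :
  open_map X Y phi -> bi_closing X phi -> constant_to_one X Y phi.
Proof.
  intros Ho Hbc. destruct (sep_bc HX Hc Hbc) as [M Hsep].
  have Hloc := fun y n (_ : Y y) => fc_local HX Hc Ho Hsep (y := y) (n := n).
  destruct (classic (exists y0, Y y0)) as [[y0 Hy0]|Hno].
  - destruct (fiber_exists Hsep y0) as [n0 Hn0]. exists n0. intros y Hy.
    destruct (fiber_exists Hsep y) as [n Hn].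
    replace n0 with n; auto. apply (irr_const HX HY Hirr Hc Hloc Hy Hy0 Hn Hn0).
  - exists 0. intros y Hy. exfalso; apply Hno; exists y; auto.
Qed.

Theorem theorem4p5 (A B : finType) (X : point A -> Prop) (Y : point B -> Prop)
  (phi : point A -> point B) :
  shift_space X -> shift_space Y -> irreducible Y -> code X Y phi ->
  ((open_map X Y phi /\ constant_to_one X Y phi -> bi_closing X phi) /\
   (open_map X Y phi /\ bi_closing X phi -> constant_to_one X Y phi) /\
   (constant_to_one X Y phi /\ bi_closing X phi -> open_map X Y phi)).
Proof.
  intros HX HY Hirr Hc. split; [|split].
  - intros [Ho Hk]. apply (dir_bc HX Hc Ho Hk).
  - intros [Ho Hb]. apply (dir_const HX HY Hirr Hc Ho Hb).
  - intros [Hk Hb]. apply (dir_open HX Hc Hk Hb).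
Qed.
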